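(* Let $k$ and $M$ be positive integers, and let $M=p_{1}^{e_{1}}p_{2}^{e_{2}}\cdots p_{l}^{e_{l}}$ be the prime factorization of $M$, where $p_1,\dots,p_l$ are distinct primes. For any integer $n\geq \max\{e_j\mid 1\le j\le l\}$, \[ \sum_{i=0}^{\varphi(M)-1}L(k,n+i)\equiv \sum_{i=0}^{\varphi(M)-1}L(n+i,k)\equiv 0\pmod{M}. \]
   Context: A matrix with entries in $\{0,1\}$ is called lonesum if it is uniquely determined (among $0$-$1$ matrices of the same size) by its row sum vector and column sum vector. For positive integers $a,b$, $L(a,b)$ denotes the number of lonesum matrices of size $a\times b$. $\varphi$ denotes Euler's totient function. *)

(* Defs.v *)
From mathcomp Require Import all_boot all_order all_algebra.
Set Implicit Arguments. Unset Strict Implicit. Unset Printing Implicit Defensive.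

(* 0-1 matrices of size a x b are represented as 'M[bool]_(a, b);
   entry true = 1, false = 0. *)

Definition row_sums (a b : nat) (A : 'M[bool]_(a, b)) : 'I_a -> nat :=
  fun i => \sum_(j < b) nat_of_bool (A i j).
Definition col_sums (a b : nat) (A : 'M[bool]_(a, b)) : 'I_b -> nat :=
  fun j => \sum_(i < a) nat_of_bool (A i j).

Definition lonesum (a b : nat) (A : 'M[bool]_(a, b)) : bool :=
  [forall B : 'M[bool]_(a, b),
     ([forall i, row_sums B i == row_sums A i] &&
      [forall j, col_sums B j == col_sums A j]) ==> (B == A)].

Definition L (a b : nat) : nat := #|[set A : 'M[bool]_(a, b) | lonesum A]|.

(* Main.v *)
Require Import Defs.
From mathcomp Require Import all_boot all_order all_algebra all_fingroup all_solvable.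
From mathcomp Require Import zify.
Set Implicit Arguments. Unset Strict Implicit. Unset Printing Implicit Defensive.



Definition nested (a b : nat) (A : 'M[bool]_(a,b)) :=
  [forall i, forall i', forall j, forall j', ~~ [&& A i j, ~~ A i j', A i' j' & ~~ A i' j]].

Lemma nestedP (a b : nat) (A : 'M[bool]_(a,b)) :
  reflect (forall i i' j j', A i j -> ~~ A i j' -> A i' j' -> A i' j) (nested A).
Proof.
apply: (iffP forallP) => [H i i' j j' h1 h2 h3| H i].
  move: (H i) => /forallP/(_ i')/forallP/(_ j)/forallP/(_ j').
  by rewrite h1 h2 h3 /=; case: (A i' j).
apply/forallP=> i'; apply/forallP=> j; apply/forallP=> j'.
by apply/negP => /and4P [h1 h2 h3 h4]; rewrite (H i i' j j') in h4.
Qed.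

Lemma ltn_sum_pt (I : finType) (F G : I -> nat) i0 :
  (forall i, F i <= G i) -> F i0 < G i0 -> \sum_i F i < \sum_i G i.
Proof.
move=> le lt; rewrite (bigD1 i0) //= [X in _ < X](bigD1 i0) //=.
by rewrite -addSn leq_add // leq_sum.
Qed.

Lemma lonesum_nested a b (A : 'M[bool]_(a,b)) : lonesum A -> nested A.
Proof.
move=> hL; apply/nestedP => i i' j j' h1 h2 h3; apply/negPn/negP => h4.
have e1 : A i j = true by [].
have e2 : A i j' = false by apply/negbTE.
have e3 : A i' j' = true by [].
have e4 : A i' j = false by apply/negbTE.
have nii : i != i'. by apply/eqP => e; subst; rewrite e1 in e4.
have njj : j != j'. by apply/eqP => e; subst; rewrite e1 in e2.
pose B := (\matrix_(p, q) if ((p == i) || (p == i')) && ((q == j) || (q == j'))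
  then ~~ A p q else A p q)%R.
have hr : forall p, row_sums B p = row_sums A p.
  move=> p; rewrite /row_sums.
  case hp: ((p == i) || (p == i')).
    rewrite [RHS](reindex_inj (@perm_inj _ (tperm j j'))); apply: eq_bigr => q _.
    rewrite mxE hp /=.
    case: tpermP => [->|->|/eqP nq1 /eqP nq2].
    - by rewrite eqxx /=; case/orP: hp => /eqP ->; rewrite ?e1 ?e2 ?e3 ?e4.
    - by rewrite eqxx orbT /=; case/orP: hp => /eqP ->; rewrite ?e1 ?e2 ?e3 ?e4.
    - by rewrite (negbTE nq1) (negbTE nq2).
  by apply: eq_bigr => q _; rewrite mxE hp.
have hc : forall q, col_sums B q = col_sums A q.
  move=> q; rewrite /col_sums.
  case hq: ((q == j) || (q == j')).
    rewrite [RHS](reindex_inj (@perm_inj _ (tperm i i'))); apply: eq_bigr => p _.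
    rewrite mxE hq andbT.
    case: tpermP => [->|->|/eqP np1 /eqP np2].
    - by rewrite eqxx /=; case/orP: hq => /eqP ->; rewrite ?e1 ?e2 ?e3 ?e4.
    - by rewrite eqxx orbT /=; case/orP: hq => /eqP ->; rewrite ?e1 ?e2 ?e3 ?e4.
    - by rewrite (negbTE np1) (negbTE np2).
  by apply: eq_bigr => p _; rewrite mxE hq andbF.
move: hL => /forallP/(_ B)/implyP.
have -> : [forall i, row_sums B i == row_sums A i] && [forall j, col_sums B j == col_sums A j].
  by apply/andP; split; apply/forallP => ?; rewrite ?hr ?hc.
move=> /(_ isT) /eqP eBA.
have := congr1 (fun M : 'M[bool]_(a,b) => M i j) eBA.
by rewrite /B mxE !eqxx /= e1.
Qed.

Lemma nested_lonesum a b (A : 'M[bool]_(a,b)) : nested A -> lonesum A.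
Proof.
move=> /nestedP hN; apply/forallP => B; apply/implyP => /andP [/forallP hr /forallP hc].
pose r := row_sums A.
have chain : forall i i', r i <= r i' -> forall j, A i j -> A i' j.
  move=> i i' le j h1; apply/negPn/negP => h2.
  have sub : forall q, (A i' q : nat) <= A i q.
    move=> q; case e: (A i' q) => //=.
    rewrite lt0b; apply/negPn/negP => e'.
    by have := hN i i' j q h1 e' e; rewrite (negbTE h2).
  have := @ltn_sum_pt _ (fun q => nat_of_bool (A i' q)) (fun q => nat_of_bool (A i q)) j sub.
  rewrite (negbTE h2) h1 => /(_ isT).
  by rewrite -/(row_sums A i') -/(row_sums A i) -/(r i) -/(r i') ltnNge le.
pose phi := fun j => \max_(i | ~~ A i j) (r i).+1.
have F1 : forall i j, ~~ A i j -> r i < phi j.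
  by move=> i j h; exact: (@leq_bigmax_cond _ (fun i => ~~ A i j) (fun i => (r i).+1)).
have F2 : forall i j, A i j -> phi j <= r i.
  move=> i j h; apply/bigmax_leqP => i' hi'.
  rewrite ltnNge; apply/negP => le.
  by have := chain i i' le j h; rewrite (negbTE hi').
have eqS : \sum_i \sum_j (A i j * r i + B i j * phi j)
         = \sum_i \sum_j (B i j * r i + A i j * phi j).
  under eq_bigr do rewrite big_split /=.
  under [RHS]eq_bigr do rewrite big_split /=.
  rewrite !big_split /=.
  have ex1 : forall (F : 'I_a -> 'I_b -> nat), \sum_i \sum_j F i j = \sum_j \sum_i F i j.
    by move=> F; rewrite exchange_big.
  rewrite (ex1 (fun i j => B i j * phi j)) (ex1 (fun i j => A i j * phi j)).
  congr (_ + _).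
    apply: eq_bigr => i _; rewrite -!big_distrl /=.
    by rewrite -/(row_sums A i) -/(row_sums B i) (eqP (hr i)).
  apply: eq_bigr => j _; rewrite -!big_distrl /=.
  by rewrite -/(col_sums A j) -/(col_sums B j) (eqP (hc j)).
have pt : forall i j, B i j * r i + A i j * phi j <= A i j * r i + B i j * phi j.
  move=> i j; case eA: (A i j); case eB: (B i j); rewrite /= ?mul1n ?mul0n ?addn0 ?add0n //.
  - by apply: F2.
  - by apply: ltnW; apply: F1; rewrite eA.
have BA : forall i j, B i j -> A i j.
  move=> i j hB; apply/negPn/negP => hA.
  have : \sum_i \sum_j (B i j * r i + A i j * phi j) <
         \sum_i \sum_j (A i j * r i + B i j * phi j).
    apply: (@ltn_sum_pt _ _ _ i) => [i'|]; first by apply: leq_sum => j' _; apply: pt.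
    apply: (@ltn_sum_pt _ _ _ j) => [j'|]; first by apply: pt.
    by rewrite hB (negbTE hA) /= !mul1n mul0n addn0 add0n; apply: F1.
  by rewrite eqS ltnn.
apply/eqP/matrixP => i j.
case eA: (A i j); case eB: (B i j) => //; last by have := BA i j; rewrite eB eA => /(_ isT).
have le : forall q, (B i q : nat) <= A i q.
  by move=> q; case e: (B i q) => //=; rewrite (BA i q e).
have := @ltn_sum_pt _ (fun q => nat_of_bool (B i q)) (fun q => nat_of_bool (A i q)) j le.
rewrite eA eB => /(_ isT).
by rewrite -/(row_sums A i) -/(row_sums B i) (eqP (hr i)) ltnn.
Qed.

Lemma L_nested a b : L a b = #|[set A : 'M[bool]_(a,b) | nested A]|.
Proof.
rewrite /L; apply: eq_card => A; rewrite !inE.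
by apply/idP/idP; [apply: lonesum_nested | apply: nested_lonesum].
Qed.

Lemma nested_trI a b (A : 'M[bool]_(a,b)) : nested A -> nested (trmx A).
Proof.
move=> /nestedP hN; apply/nestedP => i i' j j'; rewrite !mxE => h1 h2 h3.
exact: (hN j' j i' i h3 h2 h1).
Qed.

Lemma L_sym a b : L a b = L b a.
Proof.
rewrite !L_nested -(card_imset _ (@trmx_inj _ a b)).
apply: eq_card => B; rewrite inE.
apply/imsetP/idP => [[A]|hB]; first by rewrite inE => hA ->; apply: nested_trI.
by exists (trmx B); [rewrite inE; apply: nested_trI | rewrite trmxK].
Qed.

Import GRing.Theory Num.Theory.

Lemma ie_step (a s N : nat) :
  (\sum_(u < s.+2) (-1) ^+ u * ('C(s.+1, u) * (a - u) ^ N)%:Z =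
   \sum_(u < s.+1) (-1) ^+ u * ('C(s, u) * (a - u) ^ N)%:Z -
   \sum_(u < s.+1) (-1) ^+ u * ('C(s, u) * (a.-1 - u) ^ N)%:Z)%R.
Proof.
rewrite big_ord_recl /= bin0 subn0 mul1n expr0 mul1r.
under eq_bigr => u _ do rewrite /bump /= add1n binS mulnDl PoszD mulrDr.
rewrite big_split /=.
have e : forall u, a - u.+1 = a.-1 - u by move=> u; lia.
under [X in (_ + (_ + X))%R]eq_bigr => u _ do rewrite e exprS mulN1r mulNr.
rewrite sumrN addrA; congr (_ - _)%R.
rewrite [in LHS]big_ord_recr /= bin_small // mul0n mulr0 addr0.
rewrite [in RHS]big_ord_recl /= bin0 subn0 mul1n expr0 mul1r; congr (_ + _)%R.

Qed.

Section Hit.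
Variables I T : finType.

Definition hit (A U : {set T}) : {set {ffun I -> T}} :=
  [set g : {ffun I -> T} | [forall i, g i \in A] && (U \subset [set g i | i : I])].

Lemma hit_split (A U : {set T}) u0 :
  #|hit A (U :\ u0)| = #|hit A (u0 |: (U :\ u0))| + #|hit (A :\ u0) (U :\ u0)|.
Proof.
rewrite -(cardsID [set g : {ffun I -> T} | u0 \in [set g i | i : I]] (hit A (U :\ u0))).
congr (_ + _); apply: eq_card => g; rewrite !inE.
  by rewrite -andbA subUset sub1set [(u0 \in _) && _]andbC.
rewrite andbA; congr (_ && _).
apply/andP/forallP => [[/imsetP hn /forallP hA] i | h].
  rewrite !inE hA andbT; apply/eqP => e; apply: hn; exists i => //.
split; last by apply/forallP => i; have := h i; rewrite !inE => /andP[].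
apply/imsetP => [[i _ e]]; have := h i; by rewrite !inE -e eqxx.
Qed.

Lemma hit_card (A U : {set T}) : U \subset A ->
  (#|hit A U|%:Z = \sum_(u < #|U|.+1) (-1) ^+ u * ('C(#|U|, u) * (#|A| - u) ^ #|I|)%:Z)%R.
Proof.
move: {2}#|U| (erefl #|U|) => s; elim: s A U => [|s IH] A U hs hUA.
  move/eqP: hs; rewrite cards_eq0 => /eqP ->.
  rewrite cards0 big_ord1 expr0 mul1r bin0 subn0 mul1n -card_ffun_on; congr (Posz _).
  apply: eq_card => g; rewrite !inE sub0set andbT; exact/forallP/ffun_onP.
have : 0 < #|U| by rewrite hs.
case/card_gt0P => u0 hu0.
have hs' : #|U :\ u0| = s by move: hs; rewrite (cardsD1 u0) hu0 add1n => -[].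
have hA' : #|A :\ u0| = #|A|.-1 by rewrite (cardsD1 u0 A) (subsetP hUA _ hu0).
have := hit_split A U u0; rewrite setD1K // => e.
have -> : (#|hit A U|%:Z = #|hit A (U :\ u0)|%:Z - #|hit (A :\ u0) (U :\ u0)|%:Z)%R.
  by rewrite e PoszD addrK.
have sU : U :\ u0 \subset A :\ u0 by apply: setSD.
rewrite (IH A (U :\ u0) hs' (subset_trans (subD1set U u0) hUA)).
rewrite (IH (A :\ u0) (U :\ u0) hs' sU) hs' hA' hs.
by rewrite ie_step.
Qed.
End Hit.

Lemma card_imset_sep (aT rT : finType) (f : aT -> rT) (D : {set aT}) (P : pred rT) :
  {in D &, injective f} -> #|[set y in f @: D | P y]| = #|[set t in D | P (f t)]|.
Proof.
move=> inj; rewrite -(card_in_imset (f:=f) (D:=[set t in D | P (f t)])); last first.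
  by move=> a b; rewrite !inE => /andP[ha _] /andP[hb _]; exact: inj.
apply: eq_card => y; rewrite !inE.
apply/andP/imsetP => [[/imsetP [t ht ->] hP]|[t]]; first by exists t; rewrite // inE ht.
by rewrite inE => /andP [ht hP] ->; split => //; apply: imset_f.
Qed.

Section Bij.
Variables k x : nat.
Local Notation T := 'I_k.+1.

Definition rs (A : 'M[bool]_(k,x)) i : {set 'I_x} := [set j | A i j].
Definition Rows (A : 'M[bool]_(k,x)) : {set {set 'I_x}} := [set rs A i | i : 'I_k].
Definition nu A (R : {set 'I_x}) := #|[set R' in Rows A | R \subset R']|.
Definition gg A (j : 'I_x) := #|[set R' in Rows A | j \in R']|.

Lemma rows_cmp A (R R' : {set 'I_x}) : nested A -> R \in Rows A -> R' \in Rows A ->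
  (R \subset R') || (R' \subset R).
Proof.
move=> /nestedP hN /imsetP [i _ ->] /imsetP [i' _ ->].
case: (boolP (rs A i \subset rs A i')) => //= /subsetPn [j]; rewrite !inE => hj hj'.
apply/subsetP => j'; rewrite !inE => h'; apply/negPn/negP => h.
by have := hN i i' j j' hj h h'; rewrite (negbTE hj').
Qed.

Lemma card_Rows A : #|Rows A| <= k.
Proof. by rewrite -[k in _ <= k]card_ord leq_imset_card. Qed.

Lemma nu_le A (R : {set 'I_x}) : nu A R <= #|Rows A|.
Proof. by apply: subset_leq_card; apply/subsetP => R'; rewrite inE => /andP[]. Qed.

Lemma nu_pos A (R : {set 'I_x}) : R \in Rows A -> 0 < nu A R.
Proof. by move=> hR; apply/card_gt0P; exists R; rewrite inE hR subxx. Qed.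

Lemma nu_anti A (R R' : {set 'I_x}) : R \subset R' -> nu A R' <= nu A R.
Proof.
move=> s; apply: subset_leq_card; apply/subsetP => R''; rewrite !inE => /andP[-> h].
exact: subset_trans s h.
Qed.

Lemma nu_lt A (R R' : {set 'I_x}) : R \in Rows A -> R \proper R' -> nu A R' < nu A R.
Proof.
move=> hR /properP [s [j hj hj']]; apply: proper_card; apply/properP; split.
  apply/subsetP => R''; rewrite !inE => /andP[-> h]; exact: subset_trans s h.
exists R; first by rewrite inE hR subxx.
rewrite inE hR /=; apply/negP => /subsetP /(_ j hj); by rewrite (negbTE hj').
Qed.

Lemma nu_sub A (R R' : {set 'I_x}) : nested A -> R \in Rows A -> R' \in Rows A ->
  nu A R' <= nu A R -> R \subset R'.
Proof.
move=> hN hR hR' le; case/orP: (rows_cmp hN hR hR') => // s.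
case: (eqVneq R R') => [->//|ne].
have : R' \proper R by rewrite properEneq eq_sym ne s.
by move=> /(nu_lt hR') ; rewrite ltnNge le.
Qed.

Lemma nu_inj A : nested A -> {in Rows A &, injective (nu A)}.
Proof.
move=> hN R R' hR hR' e; apply/eqP; rewrite eqEsubset.
by rewrite (nu_sub hN hR hR') ?e // (nu_sub hN hR' hR) ?e.
Qed.

Definition Im m : {set T} := [set t : T | 1 <= t < m.+1].
Definition Jm m : {set T} := [set t : T | 0 <= t < m.+1].
Definition Km m : {set T} := [set t : T | 1 <= t < m].

Lemma card_range lo hi : hi <= k.+1 -> #|[set t : T | lo <= t < hi]| = hi - lo.
Proof.
move=> hhi.
have inj : injective (fun u : 'I_(hi - lo) => (inord (lo + u) : T)).
  move=> u v /(congr1 (@nat_of_ord _)).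
  have hu := ltn_ord u; have hv := ltn_ord v.
  have e1 : lo + u < k.+1 by lia.
  have e2 : lo + v < k.+1 by lia.
  by rewrite (inordK e1) (inordK e2) => /addnI /val_inj.
rewrite -[hi - lo]card_ord -(card_imset _ inj); apply: eq_card => t.
rewrite inE; apply/idP/imsetP => [/andP [h1 h2]|[u _ ->]].
  have hu : t - lo < hi - lo by lia.
  exists (Ordinal hu) => //; apply: val_inj; rewrite /= inordK; lia.
rewrite inordK; last by have := ltn_ord u; lia.
by have := ltn_ord u; lia.
Qed.

Lemma nu_surj A t : nested A -> 1 <= t <= #|Rows A| -> exists2 R, R \in Rows A & nu A R = t.
Proof.
move=> hN ht.
have hm := card_Rows A.
pose S := [set (inord (nu A R) : T) | R in Rows A].
have sub : S \subset Im #|Rows A|.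
  apply/subsetP => s /imsetP [R hR ->]; rewrite inE inordK.
    by rewrite nu_pos //= ltnS nu_le.
  by rewrite ltnS (leq_trans (nu_le A R)).
have cS : #|S| = #|Rows A|.
  apply: card_in_imset => R R' hR hR' /(congr1 (@nat_of_ord _)).
  rewrite !inordK ?ltnS ?(leq_trans (nu_le A _)) //.
  exact: nu_inj.
have eS : S = Im #|Rows A|.
  apply/eqP; rewrite eqEcard sub /= cS /Im card_range ?subn1 //.
have : (inord t : T) \in S by rewrite eS inE inordK //; lia.
case/imsetP => R hR /(congr1 (@nat_of_ord _)); rewrite !inordK; try lia.
  by move=> e; exists R.
by rewrite ltnS (leq_trans (nu_le A R)).
Qed.


Lemma rs_in A i : rs A i \in Rows A.
Proof. by apply/imsetP; exists i. Qed.

Lemma gg_le A j : gg A j <= #|Rows A|.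
Proof. by apply: subset_leq_card; apply/subsetP => R'; rewrite inE => /andP[]. Qed.

Definition Phi A : {ffun 'I_k -> T} * {ffun 'I_x -> T} :=
  ([ffun i => inord (nu A (rs A i))], [ffun j => inord (gg A j)]).
Definition Psi (p : {ffun 'I_k -> T} * {ffun 'I_x -> T}) : 'M[bool]_(k,x) :=
  (\matrix_(i, j) (p.1 i <= p.2 j)%N)%R.
Definition Sig m := hit 'I_k (Im m) (Im m).
Definition Gm m := hit 'I_x (Jm m) (Km m).
Definition Pairs := [set p : {ffun 'I_k -> T} * {ffun 'I_x -> T} |
  [exists m : T, (p.1 \in Sig m) && (p.2 \in Gm m)]].

Lemma PsiPhi A : nested A -> Psi (Phi A) = A.
Proof.
move=> hN; apply/matrixP => i j; rewrite mxE /= !ffunE.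
have hm := card_Rows A.
have b1 : nu A (rs A i) < k.+1 by rewrite ltnS (leq_trans (nu_le _ _)).
have b2 : gg A j < k.+1 by rewrite ltnS (leq_trans (gg_le _ _)).
rewrite (inordK b1) (inordK b2).
case e: (A i j).
  apply: subset_leq_card; apply/subsetP => R; rewrite !inE => /andP [-> s] /=.
  by apply: (subsetP s j); rewrite inE e.
apply/negbTE; rewrite -ltnNge; apply: proper_card; apply/properP; split.
  apply/subsetP => R; rewrite !inE => /andP [hR hj]; rewrite hR /=.
  case/orP: (rows_cmp hN hR (rs_in A i)) => // /subsetP /(_ j hj).
  by rewrite inE e.
by exists (rs A i); rewrite !inE rs_in ?subxx // e.
Qed.

Lemma Phi_Pairs A : nested A -> Phi A \in Pairs.
Proof.
move=> hN; have hm := card_Rows A.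
have hmk : #|Rows A| < k.+1 by [].
rewrite inE; apply/existsP; exists (inord #|Rows A|); apply/andP; split; rewrite inE.
  apply/andP; split.
    apply/forallP => i; rewrite ffunE inE !inordK ?ltnS ?(leq_trans (nu_le _ _)) //.
    by rewrite nu_pos ?rs_in //= ltnS nu_le.
  apply/subsetP => t; rewrite inE inordK // => /andP [h1 h2].
  have ht : 1 <= t <= #|Rows A| by rewrite h1 -ltnS.
  have [R hR eR] := nu_surj hN ht.
  case/imsetP: hR => i _ eRi; apply/imsetP; exists i => //.
  have b : nu A (rs A i) < k.+1 by rewrite ltnS (leq_trans (nu_le _ _)).
  by apply: val_inj; rewrite /= ffunE (inordK b) -eRi eR.
apply/andP; split.
  apply/forallP => j; have b : gg A j < k.+1 by rewrite ltnS (leq_trans (gg_le _ _)).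
  by rewrite ffunE inE (inordK b) (inordK hmk) /= ltnS gg_le.
apply/subsetP => t; rewrite inE inordK // => /andP [h1 h2].
have ht1 : 1 <= t <= #|Rows A| by rewrite h1 ltnW.
have ht2 : 1 <= t.+1 <= #|Rows A| by rewrite h2.
have [R hR eR] := nu_surj hN ht1.
have [R2 hR2 eR2] := nu_surj hN ht2.
have s21 : R2 \subset R.
  case/orP: (rows_cmp hN hR hR2) => // s.
  by have := nu_anti A s; rewrite eR eR2 ltnn.
have : ~~ (R \subset R2).
  apply/negP => s; have eq : R = R2 by apply/eqP; rewrite eqEsubset s s21.
  by move: eR2; rewrite -eq eR; lia.
case/subsetPn => j hj hj2.
apply/imsetP; exists j => //; apply: val_inj; rewrite /= ffunE.
suff -> : gg A j = t by rewrite inordK // ltnS ltnW.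
rewrite /gg -eR /nu; apply: eq_card => R'; rewrite !inE.
case hR': (R' \in Rows A) => //=; apply/idP/idP => [hjR'|s]; last exact: (subsetP s).
apply: (nu_sub hN hR hR'); rewrite eR.
case/orP: (rows_cmp hN hR2 hR') => s; last first.
  by have := subsetP s j hjR'; rewrite (negbTE hj2).
have : R2 \proper R' by apply/properP; split => //; exists j.
by move/(nu_lt hR2); rewrite eR2 ltnS.
Qed.

Lemma Psi_nested p : nested (Psi p).
Proof.
apply/nestedP => i i' j j'; rewrite !mxE -ltnNge => h1 h2 h3; lia.
Qed.


Lemma PhiPsi p : p \in Pairs -> Phi (Psi p) = p.
Proof.
case: p => s g; rewrite inE => /existsP [m /andP [hs hg]].
rewrite !inE /= in hs hg.
case/andP: hs => /forallP sv /subsetP shit.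
case/andP: hg => /forallP gv /subsetP ghit.
have hmk := ltn_ord m.
pose F (t : nat) : {set 'I_x} := [set j | t <= g j].
have rsF : forall i, rs (Psi (s, g)) i = F (s i).
  by move=> i; apply/setP => j; rewrite !inE mxE.
have sv' : forall i, 1 <= s i <= m by move=> i; have := sv i; rewrite inE ltnS.
have gv' : forall j, g j <= m by move=> j; have := gv j; rewrite inE ltnS.
have Fsub : forall t t' : T, t \in Im m -> t' \in Im m -> (F t \subset F t') = (t' <= t).
  move=> t t'; rewrite !inE ltnS => /andP [t1 t2] /andP [t'1 t'2].
  apply/idP/idP => [sub|le]; last first.
    by apply/subsetP => j; rewrite !inE => h; exact: leq_trans le h.
  rewrite leqNgt; apply/negP => lt.
  have : t \in Km m by rewrite inE t1 (leq_trans lt t'2).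
  move/ghit/imsetP => [j _ ej].
  have := subsetP sub j; rewrite !inE -ej leqnn => /(_ isT).
  by rewrite leqNgt lt.
have Finj : {in Im m &, injective (fun t : T => F t)}.
  move=> t t' ht ht' e; apply/val_inj/eqP; rewrite eqn_leq.
  by rewrite -(Fsub _ _ ht ht') -(Fsub _ _ ht' ht) e !subxx.
have eRows : Rows (Psi (s, g)) = [set F (t : T) | t in Im m].
  apply/setP => R; apply/imsetP/imsetP => [[i _ ->]|[t ht ->]].
    by exists (s i); [rewrite inE; apply: sv' | rewrite rsF].
  have := shit t ht; case/imsetP => i _ ->.
  by exists i => //; rewrite rsF.
have cI : forall v, v <= m -> #|[set t in Im m | t <= v]| = v.
  move=> v hv; transitivity (v.+1 - 1); last by rewrite subn1.
  rewrite -card_range; last by lia.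
  apply: eq_card => t; rewrite !inE; apply/andP/andP => [[/andP [h1 h2] h3]|[h1 h2]].
    by split => //; rewrite ltnS.
  rewrite ltnS in h2; split => //; rewrite h1 /= ltnS (leq_trans h2 hv) //.
congr (_, _); apply/ffunP => i; rewrite ffunE.
  rewrite /nu eRows card_imset_sep // rsF.
  have -> : #|[set t in Im m | F (s i) \subset F t]| = #|[set t in Im m | t <= s i]|.
    apply: eq_card => t; have [ht|ht] := boolP (t \in Im m).
      by rewrite !inE (Fsub _ _ (sv i) ht).
    by move: ht; rewrite !inE => /negbTE ->.
  rewrite cI; last by case/andP: (sv' i).
  by rewrite inord_val.
rewrite /gg eRows card_imset_sep //.
have -> : #|[set t in Im m | i \in F t]| = #|[set t in Im m | t <= g i]|.
  by apply: eq_card => t; rewrite !inE.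
by rewrite cI ?gv' // inord_val.
Qed.

Lemma card_nested_Pairs : #|[set A : 'M[bool]_(k,x) | nested A]| = #|Pairs|.
Proof.
rewrite -(card_in_imset (f := Phi)); last first.
  move=> A B; rewrite !inE => hA hB e.
  by rewrite -(PsiPhi hA) -(PsiPhi hB) e.
apply: eq_card => p; apply/imsetP/idP => [[A]|hp].
  by rewrite inE => hA ->; apply: Phi_Pairs.
by exists (Psi p); [rewrite inE; apply: Psi_nested | rewrite PhiPsi].
Qed.

Lemma card_Im (m : T) : #|Im m| = m.
Proof. by rewrite /Im card_range ?subn1 // ltn_ord. Qed.

Lemma im_sig s (m : T) : s \in Sig m -> [set s i | i : 'I_k] = Im m.
Proof.
rewrite inE => /andP [/forallP sv sub]; apply/eqP; rewrite eqEsubset sub andbT.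
by apply/subsetP => t /imsetP [i _ ->].
Qed.

Lemma card_Pairs : #|Pairs| = \sum_(m : T) #|Sig m| * #|Gm m|.
Proof.
pose mo (p : {ffun 'I_k -> T} * {ffun 'I_x -> T}) : T := inord #|[set p.1 i | i : 'I_k]|.
have emo : forall p (m : T), p.1 \in Sig m -> mo p = m.
  move=> p m h; apply: val_inj; rewrite /mo.
  have e : [set p.1 i | i : 'I_k] = Im m := im_sig h.
  by rewrite e card_Im inord_val.
rewrite -sum1_card (partition_big mo predT) //=.
apply: eq_bigr => m _; rewrite -cardsX -sum1_card; apply: eq_bigl => -[p1 p2].
rewrite in_setX [(_, _) \in Pairs]inE; apply/andP/andP => [[/existsP [m' /andP [h1 h2]] /eqP e]|[h1 h2]].
  by move: e; rewrite (emo (p1, p2) m' h1) => <-; split.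
split; first by apply/existsP; exists m; rewrite h1 h2.
by rewrite (emo (p1, p2) m h1).
Qed.

End Bij.

Lemma euler_pow (M n c : nat) : 0 < M ->
  (forall p, p \in primes M -> logn p M <= n) -> M %| c ^ n * (c ^ totient M - 1).
Proof.
move=> hM hn; apply/dvdn_partP => // p hp.
have hp' : p \in primes M by [].
have pr : prime p by move: hp'; rewrite mem_primes => /and3P[].
rewrite p_part.
case: (boolP (p %| c)) => hpc.
  apply: dvdn_mulr; apply: dvdn_trans (dvdn_exp2r n hpc).
  by rewrite dvdn_exp2l // hn.
apply: dvdn_mull.
have cop : coprime c (p ^ logn p M).
  by apply: coprimeXr; rewrite coprime_sym prime_coprime.
have c0 : 0 < c by case: c hpc cop => //; rewrite dvdn0.
have hpos : 1 <= c ^ totient M by rewrite expn_gt0 c0.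
rewrite -(eqn_mod_dvd _ hpos).
rewrite -{1}(partnC p hM) totient_coprime ?coprime_partC // expnM p_part.
by rewrite -modnXm Euler_exp_totient // modnXm exp1n.
Qed.

Lemma geom (b e : nat) : b * \sum_(i < e) b.+1 ^ i = b.+1 ^ e - 1.
Proof.
elim: e => [|e IH]; first by rewrite big_ord0 muln0 expn0.
rewrite big_ord_recr /= mulnDr IH expnS.
have : 0 < b.+1 ^ e by rewrite expn_gt0.
nia.
Qed.

Lemma key_dvd (M n b : nat) : 0 < M ->
  (forall p, p \in primes M -> logn p M <= n) ->
  M %| b * \sum_(i < totient M) b.+1 ^ (n + i).
Proof.
move=> hM hn.
have -> : b * \sum_(i < totient M) b.+1 ^ (n + i) = b.+1 ^ n * (b.+1 ^ totient M - 1).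
  rewrite -geom [RHS]mulnCA [in RHS]big_distrr /=.
  by congr (_ * _); apply: eq_bigr => i _; rewrite expnD.
exact: euler_pow.
Qed.

Lemma PoszS (I : finType) (F : I -> nat) :
  Posz (\sum_i F i) = (\sum_i (F i)%:Z)%R.
Proof. by rewrite (big_morph Posz PoszD (erefl _)). Qed.

Lemma sig_dvd k (m : 'I_k.+1) : 0 < k -> m %| #|Sig k m|.
Proof.
move=> hk.
have := hit_card 'I_k (subxx (Im k m)); rewrite card_Im card_ord => e.
have : (m%:Z %| #|Sig k m|%:Z)%Z.
  rewrite /Sig e; apply: rpred_sum => v _; apply: dvdz_mull; rewrite dvdzE /=.
  have ek : (m - v) ^ k = (m - v) * (m - v) ^ k.-1 by rewrite -expnS prednK.
  by rewrite ek mulnA [_ * (m - v)]mulnC -mul_bin_down -mulnA dvdn_mulr.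
by rewrite dvdzE.
Qed.

Lemma L_formula k x : (Posz (L k x) =
  \sum_(m : 'I_k.+1) #|Sig k m|%:Z *
     \sum_(u < (m : nat).-1.+1) (-1) ^+ u * ('C(m.-1, u) * (m.+1 - u) ^ x)%:Z)%R.
Proof.
rewrite L_nested card_nested_Pairs card_Pairs PoszS; apply: eq_bigr => m _.
rewrite PoszM; congr (_ * _)%R.
have sub : Km k m \subset Jm k m by apply/subsetP => t; rewrite !inE; lia.
rewrite /Gm (hit_card _ sub) card_ord.
have -> : #|Km k m| = m.-1 by rewrite /Km card_range ?subn1 // ltnW.
have -> : #|Jm k m| = m.+1 by rewrite /Jm card_range ?subn0.
by [].
Qed.

Lemma main_dvd (k M n : nat) : 0 < k -> 0 < M ->
  (forall p, p \in primes M -> logn p M <= n) ->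
  M %| \sum_(i < totient M) L k (n + i).
Proof.
move=> hk hM hn.
suff : (M%:Z %| Posz (\sum_(i < totient M) L k (n + i)))%Z by rewrite dvdzE.
rewrite PoszS.
under eq_bigr do rewrite L_formula.
rewrite exchange_big /=; apply: rpred_sum => m _.
have ex : forall (F : 'I_(totient M) -> 'I_(m.-1.+1) -> int),
  (\sum_i \sum_j F i j = \sum_j \sum_i F i j)%R by move=> F; rewrite exchange_big.
rewrite -mulr_sumr ex.
under eq_bigr do rewrite -mulr_sumr.
rewrite mulr_sumr; apply: rpred_sum => u _.
rewrite mulrCA; apply: dvdz_mull.
rewrite -PoszS -PoszM dvdzE /=.
have [q ->] := dvdnP (sig_dvd m hk).
have hu : u <= m.-1 by rewrite -ltnS.
have -> : m.+1 - u = (m - u).+1 by lia.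
rewrite -big_distrr /= -mulnA (mulnA m) mul_bin_down.
apply: dvdn_mull; rewrite -mulnA mulnCA.
apply: dvdn_mull; exact: key_dvd.
Qed.

Theorem theorem3p8 (k M n : nat) (hk : 0 < k) (hM : 0 < M)
  (hn : forall p, p \in primes M -> logn p M <= n) :
  \sum_(i < totient M) L k (n + i) = 0 %[mod M] /\
  \sum_(i < totient M) L (n + i) k = 0 %[mod M].
Proof.
have h := main_dvd hk hM hn.
split; first by rewrite mod0n; apply/eqP.
under eq_bigr do rewrite L_sym.
by rewrite mod0n; apply/eqP.
Qed.
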